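(* For $n=0,1,2,\dots$ let $H_n$ denote the $n$-th (physicists') Hermite polynomial and define $h_n(x)=e^{-x^2}\left[H_{n+1}^2(x)-H_n(x)H_{n+2}(x)\right]$ for $x\in\mathbb{R}$. Then $h_n$ is positive on $\mathbb{R}$ and satisfies, for all $x\in\mathbb{R}$, \[ h_n(x)\le\begin{cases}\dfrac{4^{n+1}}{2\pi}\,\dfrac{2n+3}{n+1}\,\Gamma^2\!\left(\frac n2+1\right), & n\text{ odd},\\[3ex] \dfrac{4^{n+1}}{2\pi}\,(n+1)\,\Gamma^2\!\left(\frac{n+1}{2}\right), & n\text{ even}.\end{cases} \]
   Context: The physicists' Hermite polynomials are defined by $H_0(x)=1$, $H_1(x)=2x$, $H_{n+1}(x)=2xH_n(x)-2nH_{n-1}(x)$; equivalently $H_n(x)=(-1)^ne^{x^2}\frac{d^n}{dx^n}e^{-x^2}$. $\Gamma$ denotes the Gamma function. *)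

(* Defs.v *)
From Stdlib Require Import Reals.
From Coquelicot Require Import Coquelicot.
Open Scope R_scope.

Fixpoint hermite (n : nat) (x : R) : R :=
  match n with
  | O => 1
  | S m =>
      match m with
      | O => 2 * x
      | S k => 2 * x * hermite m x - 2 * INR m * hermite k x
      end
  end.

Definition Gamma (s : R) : R :=
  RInt_gen (fun t => Rpower t (s - 1) * exp (- t)) (at_right 0) (Rbar_locally p_infty).

Definition hfun (n : nat) (x : R) : R :=
  exp (- x ^ 2) * (hermite (S n) x ^ 2 - hermite n x * hermite (S (S n)) x).

Definition hbound (n : nat) : R :=
  if Nat.odd n then
    4 ^ (S n) / (2 * PI) * ((2 * INR n + 3) / (INR n + 1)) * (Gamma (INR n / 2 + 1)) ^ 2
  else
    4 ^ (S n) / (2 * PI) * (INR n + 1) * (Gamma ((INR n + 1) / 2)) ^ 2.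

(* Main.v *)
Require Import Defs.
From Stdlib Require Import Reals Lra Lia Psatz.
From Coquelicot Require Import Coquelicot.
Open Scope R_scope.

Lemma herm_SS n x : hermite (S (S n)) x = 2 * x * hermite (S n) x - 2 * INR (S n) * hermite n x.
Proof. reflexivity. Qed.

Lemma herm_deriv n x : is_derive (hermite n) x (2 * x * hermite n x - hermite (S n) x).
Proof.
  revert x.
  enough (forall x, is_derive (hermite n) x (2 * x * hermite n x - hermite (S n) x) /\
                    is_derive (hermite (S n)) x (2 * x * hermite (S n) x - hermite (S (S n)) x)) by (intro x; apply H).
  induction n as [|n IH]; intro x.
  - split.
    + simpl. replace (2 * x * 1 - 2 * x) with 0 by ring. apply (is_derive_const 1).
    + simpl hermite. auto_derive; auto. simpl. ring.
  - split; [apply IH|].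
    destruct (IH x) as [H0 H1].
    eapply is_derive_ext; [intro t; symmetry; apply herm_SS|].
    Opaque hermite. auto_derive.
      + split; [exists (2 * x * hermite (S n) x - hermite (S (S n)) x); exact H1|].
        split; [exists (2 * x * hermite n x - hermite (S n) x); exact H0|]. auto.
      + replace (Derive (fun y => hermite n y) x) with (2 * x * hermite n x - hermite (S n) x) by (symmetry; apply is_derive_unique; exact H0).
        replace (Derive (fun y => hermite (S n) y) x) with (2 * x * hermite (S n) x - hermite (S (S n)) x) by (symmetry; apply is_derive_unique; exact H1).
        rewrite (herm_SS (S n)), (herm_SS n). change (match n with 0%nat => 1 | S _ => INR n + 1 end) with (INR (S n)). rewrite !S_INR. ring.
Qed.

Definition NN (n : nat) : R := INR (S n).
Definition Ef (n : nat) (x : R) : R :=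
  exp (- x ^ 2) * ((1 + / (2 * NN n)) * hermite (S n) x ^ 2 + 2 * NN n * hermite n x ^ 2
                   - 2 * x * hermite n x * hermite (S n) x).

Lemma NN_pos n : 0 < NN n.
Proof. unfold NN. apply lt_0_INR. lia. Qed.

Lemma Ef_deriv n x : is_derive (Ef n) x (- (x / NN n) * exp (- x ^ 2) * hermite (S n) x ^ 2).
Proof.
  unfold Ef. Opaque hermite.
  pose proof (herm_deriv n x) as H0. pose proof (herm_deriv (S n) x) as H1.
  auto_derive.
  - repeat split; auto; first [exists (2 * x * hermite n x - hermite (S n) x); exact H0
                         | exists (2 * x * hermite (S n) x - hermite (S (S n)) x); exact H1].
  - replace (Derive (fun y => hermite n y) x) with (2 * x * hermite n x - hermite (S n) x) by (symmetry; apply is_derive_unique; exact H0).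
    replace (Derive (fun y => hermite (S n) y) x) with (2 * x * hermite (S n) x - hermite (S (S n)) x) by (symmetry; apply is_derive_unique; exact H1).
    rewrite (herm_SS n). replace (- (x * (x * 1))) with (- x ^ 2) by ring. pose proof (NN_pos n). unfold NN in *. set (N := INR (S n)) in *. field. lra.
Qed.

Lemma hfun_Ef n x : hfun n x <= Ef n x.
Proof.
  unfold hfun, Ef. rewrite (herm_SS n). fold (NN n).
  pose proof (NN_pos n). pose proof (exp_pos (- x ^ 2)).
  set (e := exp (- x ^ 2)). set (a := hermite n x). set (b := hermite (S n) x).
  assert (0 <= e * (b ^ 2 / (2 * NN n))).
  { apply Rmult_le_pos; [left; assumption|]. unfold Rdiv; apply Rmult_le_pos; [apply pow2_ge_0| apply Rlt_le, Rinv_0_lt_compat; apply Rmult_lt_0_compat; [apply Rlt_0_2|assumption]]. }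
  replace (e * ((1 + / (2 * NN n)) * b ^ 2 + 2 * NN n * a ^ 2 - 2 * x * a * b))
    with (e * (b ^ 2 - a * (2 * x * b - 2 * NN n * a)) + e * (b ^ 2 / (2 * NN n))) by (field; lra).
  lra.
Qed.

Lemma Ef_max n x : Ef n x <= Ef n 0.
Proof.
  pose proof (NN_pos n) as HN.
  assert (Hk: 0 < / NN n) by (apply Rinv_0_lt_compat; exact HN).
  destruct (Rtotal_order x 0) as [Hx|[Hx|Hx]].
  - destruct (MVT_cor2 (Ef n) (fun c => - (c / NN n) * exp (- c ^ 2) * hermite (S n) c ^ 2) x 0 Hx)
      as [c [Hc1 Hc2]].
    + intros c _. apply is_derive_Reals, Ef_deriv.
    + pose proof (exp_pos (- c ^ 2)) as He. pose proof (pow2_ge_0 (hermite (S n) c)) as Hh.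
      assert (Hp: 0 <= (- c * / NN n) * (exp (- c ^ 2) * hermite (S n) c ^ 2) * (- x)).
      { apply Rmult_le_pos; [apply Rmult_le_pos|].
        - apply Rmult_le_pos; [lra|lra].
        - apply Rmult_le_pos; lra.
        - lra. }
      assert (Ef n 0 - Ef n x = (- c * / NN n) * (exp (- c ^ 2) * hermite (S n) c ^ 2) * (- x))
        by (rewrite Hc1; unfold Rdiv; ring).
      lra.
  - subst; lra.
  - destruct (MVT_cor2 (Ef n) (fun c => - (c / NN n) * exp (- c ^ 2) * hermite (S n) c ^ 2) 0 x Hx)
      as [c [Hc1 Hc2]].
    + intros c _. apply is_derive_Reals, Ef_deriv.
    + pose proof (exp_pos (- c ^ 2)) as He. pose proof (pow2_ge_0 (hermite (S n) c)) as Hh.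
      assert (Hp: 0 <= (c * / NN n) * (exp (- c ^ 2) * hermite (S n) c ^ 2) * x).
      { apply Rmult_le_pos; [apply Rmult_le_pos|].
        - apply Rmult_le_pos; [lra|lra].
        - apply Rmult_le_pos; lra.
        - lra. }
      assert (Ef n x - Ef n 0 = - ((c * / NN n) * (exp (- c ^ 2) * hermite (S n) c ^ 2) * x))
        by (rewrite Hc1; unfold Rdiv; ring).
      lra.
Qed.

Lemma Delta_pos n x : 0 < hermite (S n) x ^ 2 - hermite n x * hermite (S (S n)) x.
Proof.
  induction n as [|n IH].
  - Transparent hermite. simpl. lra.
  - rewrite (herm_SS (S n)). rewrite (herm_SS n) in IH |- *.
    rewrite !S_INR in *. Opaque hermite.
    set (a := hermite n x) in *. set (b := hermite (S n) x) in *.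
    assert (0 <= INR n) by apply pos_INR.
    nra.
Qed.

Lemma hfun_pos n x : 0 < hfun n x.
Proof. unfold hfun. apply Rmult_lt_0_compat; [apply exp_pos | apply Delta_pos]. Qed.
Lemma exd_cont (f : R -> R) x : ex_derive f x -> continuous f x.
Proof. intro H. exact (ex_derive_continuous f x H). Qed.


Lemma lim_pinfty_bound (f : R -> R) l C :
  (forall x, 1 <= x -> Rabs (f x - l) <= C / x) -> filterlim f (Rbar_locally p_infty) (locally l).
Proof.
  intros Hb P [eps HP].
  exists (1 + Rabs C / eps). intros x Hx.
  pose proof (cond_pos eps) as He.
  assert (H0 : 0 <= Rabs C / eps) by (apply Rdiv_le_0_compat; [apply Rabs_pos|lra]).
  apply HP. change (Rabs (f x - l) < eps).
  eapply Rle_lt_trans; [apply Hb; lra|].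
  apply Rmult_lt_reg_r with x; [lra|].
  unfold Rdiv. rewrite Rmult_assoc, Rinv_l by lra. rewrite Rmult_1_r.
  eapply Rle_lt_trans; [apply Rle_abs|].
  assert (Rabs C = Rabs C / eps * eps) by (field; lra).
  nra.
Qed.

Definition phi (u : R) : R := exp (- u ^ 2).
Definition AA (x : R) : R := RInt phi 0 x.

Lemma phi_cont x : continuous phi x.
Proof. apply exd_cont. unfold phi. auto_derive. auto. Qed.

Lemma phi_exRInt a b : ex_RInt phi a b.
Proof. apply (ex_RInt_continuous (V:=R_CompleteNormedModule)). intros; apply phi_cont. Qed.

Lemma AA_deriv x : is_derive AA x (phi x).
Proof.
  apply (is_derive_RInt phi AA 0 x).
  - apply filter_forall. intros b. apply (RInt_correct (V:=R_CompleteNormedModule)), phi_exRInt.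
  - apply phi_cont.
Qed.

Definition fB (x t : R) : R := exp (- (x ^ 2 * (1 + t ^ 2))) / (1 + t ^ 2).
Definition BB (x : R) : R := RInt (fun t => fB x t) 0 1.

Lemma fB_dx x t : is_derive (fun u => fB u t) x (- 2 * x * exp (- (x ^ 2 * (1 + t ^ 2)))).
Proof.
  unfold fB. auto_derive.
  - pose proof (pow2_ge_0 t). lra.
  - replace (x * (x * 1) * (1 + t * (t * 1))) with (x ^ 2 * (1 + t ^ 2)) by ring. pose proof (pow2_ge_0 t). field. lra.
Qed.

Lemma fB_cont_t x t : continuous (fun t => fB x t) t.
Proof. apply exd_cont. unfold fB. auto_derive. pose proof (pow2_ge_0 t). lra. Qed.

Lemma BB_deriv x : is_derive BB x (- 2 * exp (- x ^ 2) * AA x).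
Proof.
  unfold BB.
  assert (H : is_derive (fun x0 : R => RInt (fun t : R => fB x0 t) 0 1) x
          (RInt (fun t : R => Derive (fun u : R => fB u t) x) 0 1)).
  { apply (is_derive_RInt_param fB 0 1 x).
    - apply filter_forall. intros y t _. eexists. apply fB_dx.
    - intros t _.
      apply continuity_2d_pt_ext with (f := fun u v => - 2 * u * exp (- (u ^ 2 * (1 + v ^ 2)))).
      { intros u v. symmetry. apply is_derive_unique, fB_dx. }
      apply continuity_2d_pt_mult.
      + apply continuity_2d_pt_mult; [apply continuity_2d_pt_const | apply continuity_2d_pt_id1].
      + apply continuity_1d_2d_pt_comp.
        * apply derivable_continuous_pt, derivable_exp.
        * apply continuity_2d_pt_opp. apply continuity_2d_pt_mult.
          -- simpl. apply continuity_2d_pt_mult; [apply continuity_2d_pt_id1|].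
             apply continuity_2d_pt_mult; [apply continuity_2d_pt_id1|apply continuity_2d_pt_const].
          -- apply continuity_2d_pt_plus; [apply continuity_2d_pt_const|]. simpl.
             apply continuity_2d_pt_mult; [apply continuity_2d_pt_id2|].
             apply continuity_2d_pt_mult; [apply continuity_2d_pt_id2|apply continuity_2d_pt_const].
    - apply filter_forall. intros y. apply (ex_RInt_continuous (V:=R_CompleteNormedModule)). intros; apply fB_cont_t. }
  replace (- 2 * exp (- x ^ 2) * AA x) with (RInt (fun t : R => Derive (fun u : R => fB u t) x) 0 1); [exact H|].
  set (c := - 2 * exp (- x ^ 2)).
  transitivity (RInt (fun y => scal x ((fun z => scal c (phi z)) (x * y + 0))) 0 1).
  { apply RInt_ext. intros t _.
    replace (Derive (fun u => fB u t) x) with (- 2 * x * exp (- (x ^ 2 * (1 + t ^ 2)))) by (symmetry; apply is_derive_unique, fB_dx).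
    unfold phi, scal, c; simpl; unfold mult; simpl.
    replace (x * (-2 * exp (- (x * (x * 1))) * exp (- ((x * t + 0) * ((x * t + 0) * 1))))) with (-2 * x * (exp (- (x * (x * 1))) * exp (- ((x * t + 0) * ((x * t + 0) * 1))))) by ring.
    rewrite <- exp_plus. f_equal. f_equal. ring. }
  pose proof (RInt_comp_lin (V:=R_CompleteNormedModule) (fun z => scal c (phi z)) x 0 0 1
     (ex_RInt_scal (V:=R_CompleteNormedModule) _ _ _ c (phi_exRInt _ _))) as Hc.
  etransitivity; [exact Hc|].
  pose proof (RInt_scal (V:=R_CompleteNormedModule) phi (x * 0 + 0) (x * 1 + 0) c (phi_exRInt _ _)) as Hs.
  etransitivity; [exact Hs|].
  assert (E0 : x * 0 + 0 = 0) by ring. assert (E1 : x * 1 + 0 = x) by ring.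
  rewrite E0, E1. reflexivity.
Qed.

Definition FF (x : R) : R := AA x ^ 2 + BB x.

Lemma FF_deriv x : is_derive FF x 0.
Proof.
  unfold FF.
  pose proof (AA_deriv x) as H1. pose proof (BB_deriv x) as H2.
  auto_derive.
  - split; [eexists; exact H1|]. split; [eexists; exact H2|]. auto.
  - replace (Derive (fun y => AA y) x) with (phi x) by (symmetry; apply is_derive_unique; exact H1).
    replace (Derive (fun y => BB y) x) with (- 2 * exp (- x ^ 2) * AA x) by (symmetry; apply is_derive_unique; exact H2).
    unfold phi. ring.
Qed.

Lemma const_deriv0 (f : R -> R) : (forall x, is_derive f x 0) -> forall x, f x = f 0.
Proof.
  intros Hd x.
  destruct (Rtotal_order x 0) as [Hx|[Hx|Hx]].
  - destruct (MVT_cor2 f (fun _ => 0) x 0 Hx) as [c [Hc _]].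
    + intros c _. apply is_derive_Reals, Hd.
    + lra.
  - subst; reflexivity.
  - destruct (MVT_cor2 f (fun _ => 0) 0 x Hx) as [c [Hc _]].
    + intros c _. apply is_derive_Reals, Hd.
    + lra.
Qed.

Lemma atan_deriv x : is_derive atan x (/ (1 + x ^ 2)).
Proof.
  apply is_derive_Reals.
  apply derivable_pt_lim_atan.
Qed.

Lemma FF0 : FF 0 = PI / 4.
Proof.
  unfold FF, AA, BB. rewrite RInt_point.
  rewrite (RInt_ext _ (fun t => / (1 + t ^ 2))).
  2: { intros t _. unfold fB. replace (- (0 ^ 2 * (1 + t ^ 2))) with 0 by ring. rewrite exp_0. unfold Rdiv. apply Rmult_1_l. }
  assert (H : is_RInt (fun t => / (1 + t ^ 2)) 0 1 (minus (atan 1) (atan 0))).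
  { apply (is_RInt_derive (V:=R_CompleteNormedModule) atan).
    - intros; apply atan_deriv.
    - intros. apply exd_cont. auto_derive. pose proof (pow2_ge_0 x). lra. }
  rewrite (is_RInt_unique _ _ _ _ H). rewrite atan_1, atan_0.
  unfold minus, plus, opp, zero; simpl. ring.
Qed.

Lemma AA_sq x : AA x ^ 2 = PI / 4 - BB x.
Proof. pose proof (const_deriv0 FF FF_deriv x). rewrite FF0 in H. unfold FF in H. lra. Qed.

Lemma BB_bounds x : 0 <= BB x <= exp (- x ^ 2).
Proof.
  assert (Hex : ex_RInt (fun t => fB x t) 0 1).
  { apply (ex_RInt_continuous (V:=R_CompleteNormedModule)). intros; apply fB_cont_t. }
  split.
  - unfold BB. apply RInt_ge_0; [lra|exact Hex|].
    intros t _. unfold fB. pose proof (pow2_ge_0 t). apply Rdiv_le_0_compat; [left; apply exp_pos|lra].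
  - unfold BB. eapply Rle_trans.
    + apply (RInt_le _ (fun _ => exp (- x ^ 2))); [lra|exact Hex| apply ex_RInt_const |].
      intros t Ht. unfold fB. pose proof (pow2_ge_0 t) as Ht2. pose proof (pow2_ge_0 x) as Hx2.
      assert (exp (- (x ^ 2 * (1 + t ^ 2))) <= exp (- x ^ 2)).
      { apply exp_le_3 || (destruct (Req_dec (x ^ 2 * t ^ 2) 0); [apply Req_le; f_equal; nra| left; apply exp_increasing; nra]). }
      pose proof (exp_pos (- (x ^ 2 * (1 + t ^ 2)))).
      apply Rle_trans with (exp (- (x ^ 2 * (1 + t ^ 2)))); [|assumption].
      unfold Rdiv. rewrite <- (Rmult_1_r (exp (- (x ^ 2 * (1 + t ^ 2))))) at 2.
      apply Rmult_le_compat_l; [lra|]. rewrite <- Rinv_1. apply Rinv_le_contravar; lra.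
    + rewrite RInt_const. unfold scal; simpl; unfold mult; simpl. lra.
Qed.

Lemma AA_ge0 x : 0 <= x -> 0 <= AA x.
Proof.
  intro Hx. unfold AA. apply RInt_ge_0; [exact Hx| apply phi_exRInt|]. intros; left; apply exp_pos.
Qed.

Lemma AA_lim : filterlim AA (Rbar_locally p_infty) (locally (sqrt PI / 2)).
Proof.
  apply (lim_pinfty_bound AA (sqrt PI / 2) (2 / sqrt PI)).
  intros x Hx.
  pose proof PI_RGT_0 as Hpi.
  assert (Hs : 0 < sqrt PI) by (apply sqrt_lt_R0; lra).
  assert (Hs2 : sqrt PI * sqrt PI = PI) by (apply sqrt_sqrt; lra).
  pose proof (AA_sq x) as Hsq. pose proof (BB_bounds x) as [Hb0 Hb1]. pose proof (AA_ge0 x ltac:(lra)) as Ha.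
  assert (He : exp (- x ^ 2) <= / x).
  { assert (exp x * exp (- x ^ 2) <= 1).
    { rewrite <- exp_plus. rewrite <- exp_0. destruct (Req_dec (x + - x ^ 2) 0) as [E|E].
      - rewrite E; lra.
      - left. apply exp_increasing. nra. }
    assert (1 + x <= exp x).
    { destruct (Req_dec x 0); [subst; rewrite exp_0; lra| left; apply exp_ineq1; lra]. }
    pose proof (exp_pos (- x ^ 2)).
    apply Rmult_le_reg_l with x; [lra|]. rewrite Rinv_r by lra. nra. }
  assert (Hdiff : (AA x - sqrt PI / 2) * (AA x + sqrt PI / 2) = - BB x) by nra.
  assert (Habs : Rabs (AA x - sqrt PI / 2) * (AA x + sqrt PI / 2) = BB x).
  { rewrite <- (Rabs_pos_eq (AA x + sqrt PI / 2)) by lra. rewrite <- Rabs_mult, Hdiff.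
    rewrite Rabs_Ropp. apply Rabs_pos_eq; lra. }
  assert (Hk : 2 / sqrt PI / x * (AA x + sqrt PI / 2) >= / x).
  { assert (2 / sqrt PI / x * (sqrt PI / 2) = / x) by (field; lra).
    assert (0 <= 2 / sqrt PI / x).
    { unfold Rdiv. apply Rmult_le_pos; [apply Rmult_le_pos; [lra|left; apply Rinv_0_lt_compat; lra]|left; apply Rinv_0_lt_compat; lra]. }
    nra. }
  apply Rmult_le_reg_r with (AA x + sqrt PI / 2); [lra|].
  lra.
Qed.
Definition gg (s t : R) : R := Rpower t (s - 1) * exp (- t).

Lemma gg_cont s x : 0 < x -> continuous (gg s) x.
Proof. intro H. apply exd_cont. unfold gg, Rpower. auto_derive. exact H. Qed.

Lemma locally_pos x : 0 < x -> locally x (fun y => 0 < y).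
Proof.
  intro H. exists (mkposreal x H). intros y Hy.
  change (Rabs (y - x) < x) in Hy. apply Rabs_def2 in Hy. lra.
Qed.

Lemma prod_pos (P : R * R -> Prop) :
  (forall a b, 0 < a -> 0 < b -> P (a, b)) ->
  filter_prod (at_right 0) (Rbar_locally p_infty) P.
Proof.
  intro H. apply (Filter_prod _ _ _ (fun a => 0 < a) (fun b => 0 < b)).
  - unfold at_right, within. apply filter_forall. auto.
  - exists 0. auto.
  - exact H.
Qed.

Lemma gen_ftc (F g : R -> R) la lb :
  (forall x, 0 < x -> is_derive F x (g x)) ->
  (forall x, 0 < x -> continuous g x) ->
  filterlim F (at_right 0) (locally la) ->
  filterlim F (Rbar_locally p_infty) (locally lb) ->
  is_RInt_gen g (at_right 0) (Rbar_locally p_infty) (lb - la).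
Proof.
  intros HF Hg H0 H1.
  assert (H := is_RInt_gen_Derive (Fa := at_right 0) (Fb := Rbar_locally p_infty) F la lb).
  eapply is_RInt_gen_ext; [| apply H].
  - apply prod_pos. intros a b Ha Hb x Hx. simpl in Hx.
    assert (0 < x) by (pose proof (Rmin_glb_lt a b 0 Ha Hb); lra).
    apply is_derive_unique, HF; auto.
  - apply prod_pos. intros a b Ha Hb x Hx. simpl in Hx.
    eexists. apply HF. pose proof (Rmin_glb_lt a b 0 Ha Hb). lra.
  - apply prod_pos. intros a b Ha Hb x Hx. simpl in Hx.
    assert (Hx0 : 0 < x) by (pose proof (Rmin_glb_lt a b 0 Ha Hb); lra).
    eapply continuous_ext_loc.
    + apply (filter_imp (fun y => 0 < y)); [|apply locally_pos; exact Hx0].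
      intros y Hy. symmetry. apply is_derive_unique, HF, Hy.
    + apply Hg, Hx0.
  - exact H0.
  - exact H1.
Qed.

Lemma at_right_le_locally x : filter_le (at_right x) (locally x).
Proof. intros P HP. unfold at_right, within. apply (filter_imp P); auto. Qed.

Lemma lim_right0 (F h : R -> R) :
  (forall t, 0 < t -> F t = h t) -> continuity_pt h 0 -> filterlim F (at_right 0) (locally (h 0)).
Proof.
  intros He Hc.
  apply (filterlim_ext_loc h).
  - unfold at_right, within. apply filter_forall. intros t Ht. symmetry. apply He, Ht.
  - eapply filterlim_filter_le_1; [apply at_right_le_locally|].
    apply continuity_pt_filterlim, Hc.
Qed.

Lemma AA_cont x : continuity_pt AA x.
Proof. apply continuity_pt_filterlim. apply exd_cont. eexists; apply AA_deriv. Qed.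

Lemma Gamma_half : is_RInt_gen (gg (/ 2)) (at_right 0) (Rbar_locally p_infty) (sqrt PI).
Proof.
  replace (sqrt PI) with (sqrt PI - 0) by ring.
  apply (gen_ftc (fun t => 2 * AA (sqrt t))).
  - intros x Hx.
    assert (Hs : 0 < sqrt x) by (apply sqrt_lt_R0; exact Hx).
    pose proof (AA_deriv (sqrt x)) as HA.
    auto_derive.
    + repeat split; auto; eexists; exact HA.
    + replace (Derive (fun y => AA y) (sqrt x)) with (phi (sqrt x)) by (symmetry; apply is_derive_unique; exact HA).
      unfold phi, gg. replace (/ 2 - 1) with (- / 2) by field.
      rewrite Rpower_Ropp, Rpower_sqrt by exact Hx.
      replace (- sqrt x ^ 2) with (- x) by (rewrite <- Rsqr_pow2, Rsqr_sqrt; lra).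
      field. lra.
  - intros; apply gg_cont; assumption.
  - assert (Hc : continuity_pt (fun t => 2 * AA (sqrt t)) 0).
    { apply continuity_pt_mult; [apply continuity_pt_const; intros ? ?; reflexivity|].
      apply (continuity_pt_comp sqrt AA); [apply continuity_pt_sqrt; lra| apply AA_cont]. }
    pose proof (lim_right0 (fun t => 2 * AA (sqrt t)) (fun t => 2 * AA (sqrt t)) (fun _ _ => eq_refl) Hc) as L.
    assert (E : 2 * AA (sqrt 0) = 0).
    { rewrite sqrt_0. unfold AA. rewrite RInt_point. unfold zero; simpl; ring. }
    simpl in L. rewrite E in L. exact L.
  - replace (sqrt PI) with (2 * (sqrt PI / 2)) by field.
    apply (filterlim_comp _ _ _ (fun t => AA (sqrt t)) (fun y => 2 * y) _ (locally (sqrt PI / 2))).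
    + apply (filterlim_comp _ _ _ sqrt AA _ (Rbar_locally p_infty)).
      * apply filterlim_sqrt_p.
      * apply AA_lim.
    + apply (continuity_pt_filterlim (fun y => 2 * y)).
      apply continuity_pt_mult; [apply continuity_pt_const; intros ? ?; reflexivity| apply continuity_pt_id].
Qed.

Lemma exp_mul_nat n u : exp (INR n * u) = exp u ^ n.
Proof.
  induction n as [|n IH].
  - simpl. rewrite Rmult_0_l. apply exp_0.
  - rewrite S_INR. replace ((INR n + 1) * u) with (INR n * u + u) by ring.
    rewrite exp_plus, IH. simpl. ring.
Qed.

Lemma pow_exp_bound k t : 0 <= t -> t ^ (S k) <= INR (S k) ^ (S k) * exp t.
Proof.
  intro Ht.
  assert (HK : 0 < INR (S k)) by (apply lt_0_INR; lia).
  set (K := INR (S k)) in *.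
  set (u := t / K).
  assert (Hu : 0 <= u) by (unfold u; apply Rdiv_le_0_compat; lra).
  assert (Et : t = K * u) by (unfold u; field; lra).
  assert (Eexp : exp t = exp u ^ (S k)) by (rewrite <- exp_mul_nat; fold K; rewrite <- Et; reflexivity).
  rewrite Eexp. rewrite Et at 1. rewrite Rpow_mult_distr.
  apply Rmult_le_compat_l; [apply pow_le; lra|].
  apply pow_incr. split; [exact Hu|].
  destruct (Req_dec u 0) as [E|E]; [rewrite E, exp_0; lra|].
  left. apply Rlt_trans with (1 + u); [lra|]. apply exp_ineq1. lra.
Qed.

Lemma Rpower_half_int t m : 0 < t -> Rpower t (INR m + / 2) = t ^ m * sqrt t.
Proof.
  intro Ht. rewrite Rpower_plus, Rpower_pow, Rpower_sqrt by exact Ht. reflexivity.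
Qed.

Lemma Gamma_rec m l :
  is_RInt_gen (gg (INR m + / 2)) (at_right 0) (Rbar_locally p_infty) l ->
  is_RInt_gen (gg (INR (S m) + / 2)) (at_right 0) (Rbar_locally p_infty) ((INR m + / 2) * l).
Proof.
  intro Hl.
  set (s := INR m + / 2).
  set (F := fun t => Rpower t s * exp (- t)).
  assert (H1 : is_RInt_gen (fun t => s * gg s t - gg (s + 1) t) (at_right 0) (Rbar_locally p_infty) (0 - 0)).
  { apply (gen_ftc F).
    - intros t Ht. unfold F, gg, Rpower. auto_derive; [exact Ht|].
      replace ((s - 1) * ln t) with (s * ln t + - ln t) by ring.
      replace (s + 1 - 1) with s by ring.
      rewrite exp_plus. replace (exp (- ln t)) with (/ t) by (rewrite exp_Ropp, exp_ln; auto). field. lra.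
    - intros t Ht. apply (continuous_minus (V:=R_NormedModule)).
      + apply (continuous_scal_r (V:=R_NormedModule) s (gg s)). apply gg_cont, Ht.
      + apply gg_cont, Ht.
    - set (h := fun t => t ^ m * sqrt t * exp (- t)).
      assert (Eh : h 0 = 0) by (unfold h; rewrite sqrt_0; ring).
      assert (Hc : continuity_pt h 0).
      { unfold h. apply continuity_pt_mult; [apply continuity_pt_mult|].
        * apply derivable_continuous_pt, derivable_pt_pow.
        * apply continuity_pt_sqrt; lra.
        * apply derivable_continuous_pt. apply derivable_pt_comp; [apply derivable_pt_opp, derivable_pt_id| apply derivable_pt_exp]. }
      pose proof (lim_right0 F h (fun t Ht => ltac:(unfold F, h, s; rewrite Rpower_half_int by exact Ht; reflexivity)) Hc) as L.
      rewrite Eh in L. exact L.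
    - apply (lim_pinfty_bound F 0 (INR (S (S m)) ^ (S (S m)))).
      intros x Hx.
      unfold F, s. rewrite Rpower_half_int by lra.
      pose proof (exp_pos (- x)) as Hex.
      assert (Hsq : sqrt x <= x).
      { assert (1 <= sqrt x) by (rewrite <- sqrt_1; apply sqrt_le_1_alt; lra).
        pose proof (sqrt_sqrt x ltac:(lra)). nra. }
      assert (Hs0 : 0 <= sqrt x) by apply sqrt_pos.
      assert (Hxm : 0 <= x ^ m) by (apply pow_le; lra).
      rewrite Rminus_0_r, Rabs_pos_eq.
      2: { apply Rmult_le_pos; [apply Rmult_le_pos|]; lra. }
      pose proof (pow_exp_bound (S m) x ltac:(lra)) as Hb.
      apply Rle_trans with (x ^ S m * exp (- x)).
      + simpl. apply Rmult_le_compat_r; [lra|]. rewrite Rmult_comm. apply Rmult_le_compat_r; lra.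
      + apply Rmult_le_reg_l with x; [lra|].
        unfold Rdiv. replace (x * (INR (S (S m)) ^ S (S m) * / x)) with (INR (S (S m)) ^ S (S m)) by (field; lra).
        replace (x * (x ^ S m * exp (- x))) with (x ^ S (S m) * exp (- x)) by (simpl; ring).
        apply Rmult_le_reg_r with (exp x); [apply exp_pos|].
        rewrite Rmult_assoc, <- exp_plus. replace (- x + x) with 0 by ring. rewrite exp_0, Rmult_1_r.
        exact Hb. }
  pose proof (is_RInt_gen_scal (gg s) s l Hl) as H2.
  pose proof (is_RInt_gen_minus _ _ _ _ H2 H1) as H3.
  replace (s * l) with (minus (scal s l) (0 - 0)).
  2: { unfold minus, plus, opp, scal; simpl; unfold mult; simpl. ring. }
  eapply is_RInt_gen_ext; [| exact H3].
  apply prod_pos. intros a b _ _ x _.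
  unfold minus, plus, opp, scal; simpl; unfold mult; simpl.
  change (match m with 0%nat => 1 | S _ => INR m + 1 end) with (INR (S m)). replace (INR (S m) + / 2) with (s + 1) by (unfold s; rewrite S_INR; ring). ring.
Qed.

Transparent hermite.

Fixpoint Gm (m : nat) : R :=
  match m with
  | O => sqrt PI
  | S k => (INR k + / 2) * Gm k
  end.

Lemma Gm_int m : is_RInt_gen (gg (INR m + / 2)) (at_right 0) (Rbar_locally p_infty) (Gm m).
Proof.
  induction m as [|m IH].
  - simpl. replace (0 + / 2) with (/ 2) by ring. apply Gamma_half.
  - simpl Gm. apply Gamma_rec, IH.
Qed.

Lemma Gamma_Gm m : Gamma (INR m + / 2) = Gm m.
Proof. unfold Gamma. apply is_RInt_gen_unique. apply Gm_int. Qed.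

Lemma herm_odd0 m : hermite (S (2 * m)) 0 = 0.
Proof.
  induction m as [|m IH].
  - simpl. ring.
  - replace (S (2 * S m)) with (S (S (S (2 * m)))) by lia.
    rewrite herm_SS, IH. ring.
Qed.

Definition cc (m : nat) : R := hermite (2 * m) 0.

Lemma cc_S m : cc (S m) = - 2 * INR (S (2 * m)) * cc m.
Proof.
  unfold cc. replace (2 * S m)%nat with (S (S (2 * m))) by lia.
  rewrite herm_SS, herm_odd0. ring.
Qed.

Lemma Gm_cc m : 16 ^ m * Gm m ^ 2 = PI * cc m ^ 2.
Proof.
  induction m as [|m IH].
  - simpl. unfold cc. simpl. rewrite Rmult_1_r, sqrt_sqrt; [ring|]. pose proof PI_RGT_0; lra.
  - rewrite cc_S. simpl Gm.
    replace (INR (S (2 * m))) with (2 * INR m + 1) by (rewrite S_INR, mult_INR; simpl; ring).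
    replace (16 ^ S m * ((INR m + / 2) * Gm m) ^ 2) with (16 * (INR m + / 2) ^ 2 * (16 ^ m * Gm m ^ 2)) by (simpl; ring).
    rewrite IH. field.
Qed.

Lemma Ef0 n : Ef n 0 = (1 + / (2 * NN n)) * hermite (S n) 0 ^ 2 + 2 * NN n * hermite n 0 ^ 2.
Proof. unfold Ef. replace (- 0 ^ 2) with 0 by ring. rewrite exp_0. ring. Qed.

Lemma Ef0_bound n : Ef n 0 <= hbound n.
Proof.
  rewrite Ef0. pose proof PI_RGT_0 as Hpi.
  destruct (Nat.Even_or_Odd n) as [[m Hm]|[m Hm]]; subst n.
  - unfold hbound.
    replace (Nat.odd (2 * m)) with false by (rewrite Nat.odd_mul; reflexivity).
    rewrite herm_odd0.
    replace ((INR (2 * m) + 1) / 2) with (INR m + / 2) by (rewrite mult_INR; simpl; field).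
    rewrite Gamma_Gm. fold (cc m).
    assert (HG : Gm m ^ 2 = PI * cc m ^ 2 / 16 ^ m).
    { rewrite <- Gm_cc. field. apply pow_nonzero. lra. }
    rewrite HG. unfold NN.
    replace (4 ^ S (2 * m)) with (4 * 16 ^ m) by (change (4 ^ S (2 * m)) with (4 * 4 ^ (2 * m)); rewrite pow_mult; replace (4 ^ 2) with 16 by ring; reflexivity).
    rewrite S_INR, mult_INR. simpl INR.
    assert (0 < 16 ^ m) by (apply pow_lt; lra).
    assert (0 <= INR m) by apply pos_INR. apply Req_le. field. repeat split; intro; lra.
  - unfold hbound.
    replace (Nat.odd (2 * m + 1)) with true by (rewrite Nat.odd_add, Nat.odd_mul; reflexivity).
    replace (2 * m + 1)%nat with (S (2 * m)) by lia.
    rewrite herm_odd0.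
    replace (INR (S (2 * m)) / 2 + 1) with (INR (S m) + / 2) by (rewrite !S_INR, mult_INR; simpl; field).
    rewrite Gamma_Gm.
    replace (S (S (2 * m))) with (2 * S m)%nat by lia. fold (cc (S m)).
    assert (HG : Gm (S m) ^ 2 = PI * cc (S m) ^ 2 / 16 ^ (S m)).
    { rewrite <- Gm_cc. field. apply pow_nonzero. lra. }
    rewrite HG. unfold NN.
    replace (4 ^ (2 * S m)) with (16 ^ S m) by (rewrite pow_mult; replace (4 ^ 2) with 16 by ring; reflexivity).
    replace (INR (S (S (2 * m)))) with (2 * INR m + 2) by (rewrite !S_INR, mult_INR; simpl INR; ring).
    replace (INR (S (2 * m))) with (2 * INR m + 1) by (rewrite !S_INR, mult_INR; simpl INR; ring).
    assert (0 < 16 ^ S m) by (apply pow_lt; lra).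
    assert (0 <= INR m) by apply pos_INR.
    apply Req_le. field. repeat split; intro; lra.
Qed.

Theorem lemma3p2 (n : nat) :
  (forall x : R, 0 < hfun n x) /\ (forall x : R, hfun n x <= hbound n).
Proof.
  split.
  - intro x. apply hfun_pos.
  - intro x. eapply Rle_trans; [apply hfun_Ef|]. eapply Rle_trans; [apply Ef_max|]. apply Ef0_bound.
Qed.
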